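(* In the setting described in the context, the discrete contact force density $\lambda^h=(\lambda^h_1,\lambda^h_2)\in Q^h$ satisfies $$\lambda^h_1(p)\ge 0\quad\text{and}\quad \lambda^h_2(p)=0\qquad\forall p\in\mathcal{V}_h^C\cup\mathcal{M}_h^C.$$
   Context: Let $\Omega\subset\mathbb{R}^2$ be a bounded polygonal Lipschitz domain with boundary partitioned into relatively open, pairwise disjoint parts $\Gamma_D,\Gamma_N,\Gamma_C$, $\mathrm{meas}(\Gamma_D)>0$, $\overline{\Gamma_C}\subset\partial\Omega\setminus\overline{\Gamma_D}$, outward unit normal on $\Gamma_C$ equal to $e_1=(1,0)$. Let $\sigma(v)=\chi\,\mathrm{tr}(\epsilon(v))I+2\mu\epsilon(v)$ ($\chi,\mu>0$, $\epsilon(v)=\frac12(\nabla v+\nabla v^T)$), $a(w,v)=\int_\Omega\sigma(w):\epsilon(v)\,dx$, $L(v)=\int_\Omega f\cdot v\,dx+\int_{\Gamma_N}g\cdot v\,ds$ with $f\in[L^2(\Omega)]^2$, $g\in[L^2(\Gamma_N)]^2$. Let $\mathcal{T}_h$ be a regular triangulation of $\Omega$ (each of $\Gamma_D,\Gamma_N,\Gamma_C$ a union of mesh edges). $\mathcal{V}_h$ and $\mathcal{M}_h$ are the sets of vertices and edge midpoints; $\mathcal{V}_h^C$ = vertices in $\overline{\Gamma_C}$, $\mathcal{M}_h^C$ = midpoints of edges on $\Gamma_C$; $\mathcal{V}_h^D,\mathcal{M}_h^D$ analogously for $\Gamma_D$; $\mathcal{V}_h^o=\mathcal{V}_h\setminus\mathcal{V}_h^D$,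 $\mathcal{M}_h^o=\mathcal{M}_h\setminus\mathcal{M}_h^D$. $V^h=\{v\in[C(\overline\Omega)]^2: v|_T\in[P_2(T)]^2\ \forall T\in\mathcal{T}_h,\ v=0\text{ on }\Gamma_D\}$, with scalar quadratic Lagrange nodal basis $\psi_z$, $z\in\mathcal{V}_h^o\cup\mathcal{M}_h^o$. $\mathcal{K}^h=\{v^h=(v^h_1,v^h_2)\in V^h: v^h_1(z)\le0\ \forall z\in\mathcal{V}_h^C\cup\mathcal{M}_h^C\}$ and $u^h\in\mathcal{K}^h$ solves $a(u^h,v^h-u^h)\ge L(v^h-u^h)$ for all $v^h\in\mathcal{K}^h$. Split each edge of $\Gamma_C$ at its midpoint into two halves; $Q^h$ is the space of continuous $\mathbb{R}^2$-valued functions on $\overline{\Gamma_C}$ that are affine on each half, and $\phi_z$ ($z\in\mathcal{V}_h^C\cup\mathcal{M}_h^C$) are the scalar continuous piecewise affine nodal basis functions on this subdivision ($\phi_z(p)=\delta_{zp}$). For a node $z$, $\omega_z$ is the union of elements sharing $z$ and $\gamma_{z,C}=\partial\omega_z\cap\Gamma_C$. Define $\pi_h:Q^h\to V^h$ by $\pi_h v=\sum_{z\in\mathcal{V}_h^C\cup\mathcal{M}_h^C}\sum_{i=1}^2 v_i(z)\psi_z e_i$, the inner product $\langle w,v\rangle_h=\sum_{z\in\mathcal{V}_h^C\cup\mathcal{M}_h^C}w(z)\cdot v(z)\int_{\gamma_{z,C}}\phi_z\,ds$ on $Q^h$, and the discrete contact force density $\lambda^h\in Q^h$ by $\langle\lambda^h,v^h\rangle_h=L(\pi_hv^h)-a(u^h,\pi_hv^h)$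 for all $v^h\in Q^h$. *)

(* Defs.v *)
(* Finite-element setting of the paper: P2 Lagrange elements on a conforming
   triangulation of a polygonal domain in R^2, frictionless contact on Gamma_C. *)
From HB Require Import structures.
From mathcomp Require Import all_boot all_order all_algebra.
From mathcomp Require Import all_classical all_reals all_analysis.
Import Order.TTheory GRing.Theory Num.Theory numFieldNormedType.Exports.

Set Implicit Arguments.
Unset Strict Implicit.
Unset Printing Implicit Defensive.

Local Open Scope classical_set_scope.
Local Open Scope ring_scope.

Section FEM.
Context {R : realType}.

Definition pt := (R * R)%type.

Definition mu2 := ((@lebesgue_measure R) \x (@lebesgue_measure R))%E.

Definition dotp (p q : pt) : R := p.1 * q.1 + p.2 * q.2.
Definition pnorm (p : pt) : R := Num.sqrt (p.1 ^+ 2 + p.2 ^+ 2).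
Definition coord (i : 'I_2) (p : pt) : R := if i == ord0 then p.1 else p.2.

Definition boundary (A : set pt) : set pt := closure A `\` interior A.

Definition tri := (pt * pt * pt)%type.
Definition tri_vertices (T : tri) : seq pt := [:: T.1.1; T.1.2; T.2].
Definition tri_set (T : tri) : set pt :=
  [set x | exists l1 l2 l3 : R, [/\ 0 <= l1, 0 <= l2, 0 <= l3,
     l1 + l2 + l3 = 1 & x = l1 *: T.1.1 + l2 *: T.1.2 + l3 *: T.2]].
Definition det2 (p q : pt) : R := p.1 * q.2 - p.2 * q.1.
Definition nondegenerate (T : tri) : Prop :=
  det2 (T.1.2 - T.1.1) (T.2 - T.1.1) != 0.
Definition tri_edges (T : tri) : seq (pt * pt) :=
  [:: (T.1.1, T.1.2); (T.1.2, T.2); (T.2, T.1.1)].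
Definition seg (e : pt * pt) : set pt :=
  [set x | exists2 t : R, 0 <= t <= 1 & x = e.1 + t *: (e.2 - e.1)].
Definition midp (e : pt * pt) : pt := 2^-1 *: (e.1 + e.2).
Definition tri_nodes (T : tri) : seq pt :=
  tri_vertices T ++ map midp (tri_edges T).

Definition mesh := seq tri.
Definition mesh_vertices (M : mesh) : seq pt := flatten (map tri_vertices M).
Definition mesh_edges (M : mesh) : seq (pt * pt) := flatten (map tri_edges M).
Definition mesh_midpoints (M : mesh) : seq pt := map midp (mesh_edges M).

Definition tri0 : tri := ((0, 0), (0, 0), (0, 0)).

Definition conforming (M : mesh) : Prop :=
  forall i j : nat, (i < size M)%N -> (j < size M)%N -> i != j ->
  let Ti := nth tri0 M i in let Tj := nth tri0 M j in
  let I := tri_set Ti `&` tri_set Tj in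
  [\/ I = set0,
      (exists v, [/\ v \in tri_vertices Ti, v \in tri_vertices Tj & I = [set v]])
    | (exists v w, [/\ v != w, v \in tri_vertices Ti /\ v \in tri_vertices Tj,
        w \in tri_vertices Ti /\ w \in tri_vertices Tj & I = seg (v, w)])].

Definition triangulation (O : set pt) (M : mesh) : Prop :=
  [/\ (forall T, T \in M -> nondegenerate T),
      conforming M &
      closure O = \bigcup_(T in [set T | T \in M]) tri_set T].

Definition bounded_dom (O : set pt) : Prop :=
  exists C : R, forall x, O x -> `|x.1| <= C /\ `|x.2| <= C.

(* Lipschitz domain: near each boundary point, in suitably rotated
   coordinates, O is the region strictly below the graph of a Lipschitz fn *)
Definition lipschitz_domain (O : set pt) : Prop :=
  forall x, boundary O x ->
  exists r c s : R, exists gam : R -> R,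
  [/\ 0 < r, c ^+ 2 + s ^+ 2 = 1,
      (exists L : R, forall a b, `|gam a - gam b| <= L * `|a - b|) &
      (forall y : pt, pnorm (y - x) < r ->
        (O y <-> - s * (y - x).1 + c * (y - x).2 < gam (c * (y - x).1 + s * (y - x).2)))].

Definition rel_open_bd (O G : set pt) : Prop :=
  G `<=` boundary O /\ exists U : set pt, open U /\ G = U `&` boundary O.

Definition boundary_partition (O GD GN GC : set pt) : Prop :=
  [/\ rel_open_bd O GD, rel_open_bd O GN, rel_open_bd O GC,
      [/\ GD `&` GN = set0, GD `&` GC = set0 & GN `&` GC = set0] &
      boundary O = closure GD `|` closure GN `|` closure GC].

Definition union_of_edges (M : mesh) (G : set pt) : Prop :=
  closure G =
  \bigcup_(e in [set e | e \in mesh_edges M /\ seg e `<=` closure G]) seg e.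

(* outward unit normal equal to e1 = (1,0) at every point of GC *)
Definition outward_normal_e1 (O GC : set pt) : Prop :=
  forall x, GC x -> exists2 r : R, 0 < r &
    forall y : pt, pnorm (y - x) < r -> (O y <-> y.1 < x.1).

Definition lexle (a b : pt) : bool := (a.1 < b.1) || ((a.1 == b.1) && (a.2 <= b.2)).
Definition nedge (e : pt * pt) : pt * pt := if lexle e.1 e.2 then e else (e.2, e.1).
(* boundary edges of the mesh, each counted once *)
Definition bedges (M : mesh) (O : set pt) : seq (pt * pt) :=
  undup [seq nedge e | e <- [seq e <- mesh_edges M | `[< seg e `<=` boundary O >]]].
Definition I01 : set R := `[0, 1].
Definition epar (e : pt * pt) (t : R) : pt := e.1 + t *: (e.2 - e.1).
Definition lint (e : pt * pt) (h : pt -> R) : R :=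
  pnorm (e.2 - e.1) * \int[lebesgue_measure]_(t in `[0, 1]) h (epar e t).
(* \int_S h ds for S a subset of the boundary of O *)
Definition bint (M : mesh) (O S : set pt) (h : pt -> R) : R :=
  \sum_(e <- bedges M O) lint e (fun x => \1_S x * h x).

Definition L2dom (O : set pt) (h : pt -> R) : Prop :=
  measurable_fun O h /\ (\int[mu2]_(x in O) ((h x) ^+ 2)%:E < +oo)%E.
Definition L2bd (M : mesh) (O G : set pt) (h : pt -> R) : Prop :=
  forall e, e \in bedges M O -> seg e `<=` closure G ->
    measurable_fun I01 (fun t : R => h (epar e t)) /\
    (\int[lebesgue_measure]_(t in I01) ((h (epar e t)) ^+ 2)%:E < +oo)%E.

Definition pd (j : 'I_2) (h : pt -> R) (x : pt) : R :=
  if j == ord0 then derive1 (fun t => h (t, x.2)) x.1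
  else derive1 (fun t => h (x.1, t)) x.2.
Definition eps (v : pt -> pt) (x : pt) : 'M[R]_2 :=
  \matrix_(i < 2, j < 2) ((pd j (coord i \o v) x + pd i (coord j \o v) x) / 2).
Definition sigma (chi mu : R) (w : pt -> pt) (x : pt) : 'M[R]_2 :=
  (chi * \tr (eps w x)) *: 1%:M + (2 * mu) *: eps w x.
Definition ddot (A B : 'M[R]_2) : R := \sum_(i < 2) \sum_(j < 2) A i j * B i j.

Definition aform (O : set pt) (chi mu : R) (w v : pt -> pt) : R :=
  \int[mu2]_(x in O) ddot (sigma chi mu w x) (eps v x).
Definition Lform (M : mesh) (O GN : set pt) (f g v : pt -> pt) : R :=
  \int[mu2]_(x in O) dotp (f x) (v x) + bint M O GN (fun x => dotp (g x) (v x)).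

Definition isP2 (S : set pt) (h : pt -> R) : Prop :=
  exists c0 c1 c2 c3 c4 c5 : R, forall x, S x ->
    h x = c0 + c1 * x.1 + c2 * x.2 + c3 * x.1 ^+ 2 + c4 * (x.1 * x.2) + c5 * x.2 ^+ 2.

Definition Vh_scal (M : mesh) (O GD : set pt) (h : pt -> R) : Prop :=
  [/\ (forall T, T \in M -> isP2 (tri_set T) h),
      {within closure O, continuous h} &
      forall x, GD x -> h x = 0].
Definition Vh (M : mesh) (O GD : set pt) (v : pt -> pt) : Prop :=
  [/\ (forall T, T \in M -> isP2 (tri_set T) (fun x => (v x).1) /\
                          isP2 (tri_set T) (fun x => (v x).2)),
      {within closure O, continuous v} &
      forall x, GD x -> v x = 0].

Definition edges_on (M : mesh) (G : set pt) : seq (pt * pt) :=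
  [seq e <- mesh_edges M | `[< seg e `<=` closure G >]].
(* V_h^C \cup M_h^C, without repetitions *)
Definition cnodes (M : mesh) (GC : set pt) : seq pt :=
  undup ([seq p <- mesh_vertices M | `[< closure GC p >]] ++
         map midp (edges_on M GC)).
Definition free_node (M : mesh) (GD : set pt) (p : pt) : Prop :=
  (p \in mesh_vertices M /\ ~ closure GD p) \/
  (p \in mesh_midpoints M /\ p \notin map midp (edges_on M GD)).

Definition Kh (M : mesh) (O GD GC : set pt) (v : pt -> pt) : Prop :=
  Vh M O GD v /\ forall z, z \in cnodes M GC -> (v z).1 <= 0.

Definition affine_on (a b : pt) (q : pt -> pt) : Prop :=
  exists al be : pt, forall t : R, 0 <= t <= 1 -> q (a + t *: (b - a)) = al + t *: be.
Definition affine_on_scal (a b : pt) (q : pt -> R) : Prop :=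
  exists al be : R, forall t : R, 0 <= t <= 1 -> q (a + t *: (b - a)) = al + t * be.
Definition Qh (M : mesh) (GC : set pt) (q : pt -> pt) : Prop :=
  {within closure GC, continuous q} /\
  forall e, e \in edges_on M GC -> affine_on e.1 (midp e) q /\ affine_on (midp e) e.2 q.
Definition Qh_scal (M : mesh) (GC : set pt) (q : pt -> R) : Prop :=
  {within closure GC, continuous q} /\
  forall e, e \in edges_on M GC ->
    affine_on_scal e.1 (midp e) q /\ affine_on_scal (midp e) e.2 q.

Definition omega (M : mesh) (z : pt) : set pt :=
  \bigcup_(T in [set T | T \in M /\ z \in tri_nodes T]) tri_set T.
Definition gammaC (M : mesh) (GC : set pt) (z : pt) : set pt :=
  boundary (omega M z) `&` GC.

Definition iph (M : mesh) (O GC : set pt) (phi : pt -> pt -> R) (w v : pt -> pt) : R :=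
  \sum_(z <- cnodes M GC) dotp (w z) (v z) * bint M O (gammaC M GC z) (phi z).
Definition pih (M : mesh) (GC : set pt) (psi : pt -> pt -> R) (v : pt -> pt) : pt -> pt :=
  fun x => \sum_(z <- cnodes M GC) psi z x *: v z.

End FEM.

(* Main.v *)
Require Import Defs.
From HB Require Import structures.
From mathcomp Require Import all_boot all_order all_algebra.
From mathcomp Require Import all_classical all_reals all_analysis.
From mathcomp Require Import ring lra.
Import Order.TTheory GRing.Theory Num.Theory numFieldNormedType.Exports.
Local Open Scope classical_set_scope.
Local Open Scope ring_scope.

Set Implicit Arguments.
Unset Strict Implicit.
Unset Printing Implicit Defensive.

Section Aux.
Context {R : realType}.

Local Notation mu := (@lebesgue_measure R).
Lemma int_mono (D1 D2 : set R) (f g : R -> R) : (forall x, D1 x -> 0 <= f x) ->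
  (forall x, D2 x -> 0 <= g x) ->
  (forall x, D1 x -> D2 x /\ f x <= g x) ->
  (\int[mu]_(x in D1) (f x)%:E <= \int[mu]_(x in D2) (g x)%:E)%E.
Proof.
move=> f0 g0 fg.
rewrite !ge0_integralE => [|x Dx|x Dx]; rewrite ?lee_fin ?f0 ?g0 //.
apply: ge_ereal_sup => _ [h hf <-]; apply: ereal_sup_ubound; exists h => // x.
apply: le_trans (hf x) _; rewrite /patch; case: ifP => [/set_mem Dx|_].
  by have [D2x fgx] := fg _ Dx; rewrite ifT ?inE // lee_fin.
by case: ifP => // /set_mem D2x; rewrite lee_fin g0.
Qed.

Lemma int_pos (g : R -> R) (a b c : R) : (forall t, 0 <= g t <= 1) -> 0 <= a -> a < b -> b <= 1 ->
  0 < c -> (forall t, a <= t <= b -> c <= g t) ->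
  0 < Rintegral mu [set` `[0, 1]] g.
Proof.
move=> g01 a0 ab b1 c0 gc.
have lo : ((c * (b - a))%:E <= \int[mu]_(x in [set` `[0%R, 1%R]]) (g x)%:E)%E.
  apply: (@le_trans _ _ (\int[mu]_(x in [set` `[a, b]%R]) c%:E)%E).
    rewrite integral_cst /=; last exact: measurable_itv.
    by rewrite lebesgue_measure_itv /= lte_fin ab -EFinM.
  apply: int_mono => [x _|x _|x /= xab]; first exact: ltW.
    by case/andP: (g01 x).
  move: xab; rewrite !in_itv /= => /andP[ax xb]; split.
    by rewrite (le_trans a0 ax) (le_trans xb b1).
  by apply: gc; rewrite ax xb.
have up : (\int[mu]_(x in [set` `[0%R, 1%R]]) (g x)%:E <= 1%:E)%E.
  apply: (@le_trans _ _ (\int[mu]_(x in [set` `[0%R, 1%R]]) 1%:E)%E).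
    apply: int_mono => [x _|x _|x Hx]; first by case/andP: (g01 x).
      by [].
    by split; [exact: Hx|case/andP: (g01 x)].
  rewrite integral_cst /=; last exact: measurable_itv.
  rewrite lebesgue_measure_itv /= lte_fin ltr01.
  by rewrite oppr0 adde0 mul1e.
rewrite /Rintegral.
have ge0 : (0 <= \int[mu]_(x in [set` `[0%R, 1%R]]) (g x)%:E)%E.
  by apply: integral_ge0 => x _; rewrite lee_fin; case/andP: (g01 x).
move: lo up ge0; case: (\int[mu]_(x in _) _)%E => //= r lo up _.
rewrite lee_fin in lo.
by apply: lt_le_trans lo; rewrite mulr_gt0 // subr_gt0.
Qed.

Implicit Types (x y z : @pt R).

Lemma ballE x y (e : R) : ball x e y <-> (`|x.1 - y.1| < e /\ `|x.2 - y.2| < e).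
Proof. by rewrite /ball /= /prod_ball -!ball_normE. Qed.

Lemma closure_ball (A : set (@pt R)) x (e : R) : closure A x -> 0 < e ->
  exists y, [/\ A y, `|x.1 - y.1| < e & `|x.2 - y.2| < e].
Proof.
move=> cA e0; have [y [Ay /ballE [h1 h2]]] := cA _ (nbhsx_ballx x _ e0).
by exists y.
Qed.

Lemma nbhs_ballE (A : set (@pt R)) x : nbhs x A ->
  exists2 e : R, 0 < e & forall y, `|x.1 - y.1| < e -> `|x.2 - y.2| < e -> A y.
Proof.
case/nbhs_ballP => e e0 H; exists e => // y h1 h2; apply: H; exact/ballE.
Qed.

Lemma ball_nbhs (A : set (@pt R)) x (e : R) : 0 < e ->
  (forall y, `|x.1 - y.1| < e -> `|x.2 - y.2| < e -> A y) -> nbhs x A.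
Proof.
move=> e0 H; apply/nbhs_ballP; exists e => // y /ballE [h1 h2]; exact: H.
Qed.

Lemma pnorm_le (v : @pt R) : pnorm v <= `|v.1| + `|v.2|.
Proof.
rewrite /pnorm -[X in _ <= X]ger0_norm ?addr_ge0 //.
rewrite -sqrtr_sqr ler_sqrt; last by rewrite sqr_ge0.
rewrite sqrrD -(real_normK (num_real v.1)) -(real_normK (num_real v.2)).
have : 0 <= `|v.1| * `|v.2| by rewrite mulr_ge0.
lra.
Qed.

Lemma sc1 (k : R) (v : @pt R) : (k *: v).1 = k * v.1. Proof. by []. Qed.
Lemma sc2 (k : R) (v : @pt R) : (k *: v).2 = k * v.2. Proof. by []. Qed.
Lemma ad1 (v w : @pt R) : (v + w).1 = v.1 + w.1. Proof. by []. Qed.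
Lemma ad2 (v w : @pt R) : (v + w).2 = v.2 + w.2. Proof. by []. Qed.
Lemma sb1 (v w : @pt R) : (v - w).1 = v.1 - w.1. Proof. by []. Qed.
Lemma sb2 (v w : @pt R) : (v - w).2 = v.2 - w.2. Proof. by []. Qed.
Definition pE := (sc1, sc2, ad1, ad2, sb1, sb2).
Lemma addKr2 x y : (x + y) - x = y.
Proof. by rewrite addrC addKr. Qed.


Lemma abs_cs (c s : R) : c ^+ 2 + s ^+ 2 = 1 -> `|c| <= 1 /\ `|s| <= 1.
Proof.
move=> cs; split; rewrite ler_norml; apply/andP; split; nra.
Qed.

Lemma lin_bound (c s a b : R) : `|c| <= 1 -> `|s| <= 1 -> `|c * a + s * b| <= `|a| + `|b|.
Proof.
move=> hc hs; apply: (le_trans (ler_normD _ _)); rewrite !normrM.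
apply: lerD; rewrite -[X in _ <= X]mul1r; apply: ler_wpM2r => //.
Qed.

Lemma boundary_notin (O : set (@pt R)) z : open O -> boundary O z -> ~ O z.
Proof.
move=> oO [_ nint] Oz; apply: nint; by move: oO; rewrite openE => /(_ z Oz).
Qed.

Lemma LL (O : set (@pt R)) x (d : @pt R) (rho : R) :
  open O -> lipschitz_domain O -> boundary O x -> d != 0 -> 0 < rho ->
  (forall tau, `|tau| < rho -> boundary O (x + tau *: d)) ->
  exists2 del : R, 0 < del & forall y, boundary O y -> `|x.1 - y.1| < del ->
     `|x.2 - y.2| < del -> exists2 tau, `|tau| < rho & y = x + tau *: d.
Proof.
move=> oO lip bx dn0 rho0 seg.
have [r [c [s [gam [r0 cs [L HL] HO]]]]] := lip x bx.
have [hc hs] := abs_cs cs.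
have L0 : 0 <= L by have := HL 1 0; rewrite subr0 normr1 mulr1; apply: le_trans.
pose Cf (v : @pt R) := c * v.1 + s * v.2.
pose Sf (v : @pt R) := - s * v.1 + c * v.2.
have bC v w : `|Cf v - Cf w| <= `|v.1 - w.1| + `|v.2 - w.2|.
  have -> : Cf v - Cf w = c * (v.1 - w.1) + s * (v.2 - w.2) by rewrite /Cf; ring.
  exact: lin_bound.
have bS v w : `|Sf v - Sf w| <= `|v.1 - w.1| + `|v.2 - w.2|.
  have -> : Sf v - Sf w = (- s) * (v.1 - w.1) + c * (v.2 - w.2) by rewrite /Sf; ring.
  by apply: lin_bound; rewrite ?normrN.
have clB z : boundary O z -> `|z.1 - x.1| < r / 4 -> `|z.2 - x.2| < r / 4 ->
    Sf (z - x) = gam (Cf (z - x)).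
  move=> bz h1 h2.
  have pn : pnorm (z - x) < r.
    apply: (le_lt_trans (pnorm_le _)) => /=; lra.
  have nO := boundary_notin oO bz.
  have ge : gam (Cf (z - x)) <= Sf (z - x).
    rewrite leNgt; apply/negP => lt; apply: nO; exact/(HO z pn).
  apply/eqP; rewrite eq_le ge andbT leNgt; apply/negP => lt.
  pose eps := Sf (z - x) - gam (Cf (z - x)).
  have eps0 : 0 < eps by rewrite subr_gt0.
  pose K := 1 + L.
  have K0 : 0 < K by rewrite /K; lra.
  pose d0 := Num.min (r / 4) (eps / K / 2).
  have d00 : 0 < d0 by rewrite lt_min; apply/andP; split;
    [lra | rewrite !divr_gt0 //].
  have [z' [Oz' h1' h2']] := closure_ball bz.1 d00.
  have := h1'; have := h2'; rewrite !lt_min => /andP[h2a h2b] /andP[h1a h1b].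
  have pn' : pnorm (z' - x) < r.
    apply: (le_lt_trans (pnorm_le _)) => /=.
    have e1 : `|z'.1 - x.1| <= `|z.1 - z'.1| + `|z.1 - x.1|.
      by rewrite (distrC z.1); apply: ler_distD.
    have e2 : `|z'.2 - x.2| <= `|z.2 - z'.2| + `|z.2 - x.2|.
      by rewrite (distrC z.2); apply: ler_distD.
    lra.
  have := (HO z' pn').1 Oz'.
  set A := `|z.1 - z'.1| + `|z.2 - z'.2|.
  have A0 : A * K < eps.
    rewrite -ltr_pdivlMr //.
    have : A < 2 * (eps / K / 2) by rewrite /A; lra.
    by rewrite mulrC divfK //; lra.
  have hS := bS (z - x) (z' - x).
  have hC := bC (z - x) (z' - x).
  have hg := HL (Cf (z - x)) (Cf (z' - x)).
  have ez1 : (z - x).1 - (z' - x).1 = z.1 - z'.1 by rewrite !pE; ring.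
  have ez2 : (z - x).2 - (z' - x).2 = z.2 - z'.2 by rewrite !pE; ring.
  rewrite ez1 ez2 -/A in hS hC.
  have hg' : `|gam (Cf (z - x)) - gam (Cf (z' - x))| <= L * A.
    by apply: (le_trans hg); apply: ler_wpM2l.
  move: hS hg'; rewrite /eps /K in A0 *.
  set S1 := Sf (z - x); set S2 := Sf (z' - x).
  set g1 := gam (Cf (z - x)); set g2 := gam (Cf (z' - x)).
  move=> hS hg' hlt.
  have := ler_norml (S1 - S2) A; rewrite hS => /esym/andP[_ ha].
  have := ler_norml (g1 - g2) (L * A); rewrite hg' => /esym/andP[hb _].
  have : A * (1 + L) = A + L * A by ring.
  have hlt' : S2 < g2 := hlt.
  have A0' : A * (1 + L) < S1 - g1 := A0.
  move=> e; lra.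
have rot1 v : v.1 = c * Cf v - s * Sf v.
  have -> : c * Cf v - s * Sf v = (c ^+ 2 + s ^+ 2) * v.1 by rewrite /Cf /Sf; ring.
  by rewrite cs mul1r.
have rot2 v : v.2 = s * Cf v + c * Sf v.
  have -> : s * Cf v + c * Sf v = (c ^+ 2 + s ^+ 2) * v.2 by rewrite /Cf /Sf; ring.
  by rewrite cs mul1r.
pose D := `|d.1| + `|d.2|.
have D0 : 0 < D.
  rewrite lt_neqAle addr_ge0 // andbT; apply/eqP => D0.
  have e1 : `|d.1| = 0 by rewrite /D in D0; have := normr_ge0 d.1; have := normr_ge0 d.2; lra.
  have e2 : `|d.2| = 0 by rewrite /D in D0; have := normr_ge0 d.1; have := normr_ge0 d.2; lra.
  move/eqP: e1; move/eqP: e2; rewrite !normr_eq0 => /eqP e2 /eqP e1.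
  by move/negP: dn0; apply; apply/eqP; rewrite [d]surjective_pairing e1 e2.
pose t0 := Num.min rho (r / (4 * (D + 1))).
have t00 : 0 < t0 by rewrite lt_min rho0 /= divr_gt0 //; lra.
have t0r : t0 <= rho by rewrite ge_min lexx.
have t0D : t0 * (D + 1) <= r / 4.
  have : t0 <= r / (4 * (D + 1)) by rewrite ge_min lexx orbT.
  rewrite -ler_pdivlMr; last lra.
  by rewrite invfM mulrA.
have segB tau : `|tau| < t0 -> Sf (tau *: d) = gam (Cf (tau *: d)).
  move=> ht; have b := seg tau (lt_le_trans ht t0r).
  have hb : `|tau| * D < r / 4.
    have h1 : `|tau| * D <= `|tau| * (D + 1) by rewrite ler_wpM2l //; lra.
    have h2 : `|tau| * (D + 1) < t0 * (D + 1) by rewrite ltr_pM2r //; lra.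
    lra.
  have e1 : `|(x + tau *: d).1 - x.1| < r / 4.
    have -> : (x + tau *: d).1 - x.1 = tau * d.1 by rewrite !pE; ring.
    rewrite normrM; apply: le_lt_trans hb; rewrite ler_wpM2l // /D.
    have := normr_ge0 d.2; lra.
  have e2 : `|(x + tau *: d).2 - x.2| < r / 4.
    have -> : (x + tau *: d).2 - x.2 = tau * d.2 by rewrite !pE; ring.
    rewrite normrM; apply: le_lt_trans hb; rewrite ler_wpM2l // /D.
    have := normr_ge0 d.1; lra.
  by have := clB _ b e1 e2; rewrite addKr2.
have CfZ tau : Cf (tau *: d) = tau * Cf d by rewrite /Cf !pE; ring.
have SfZ tau : Sf (tau *: d) = tau * Sf d by rewrite /Sf !pE; ring.
pose Cd := Cf d.
have Cd0 : Cd != 0.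
  apply/negP => /eqP Cd0.
  have g0 : gam 0 = 0.
    have := segB 0; rewrite normr0 => /(_ t00).
    by rewrite CfZ SfZ !mul0r.
  have Sd0 : Sf d = 0.
    have ht : `|t0 / 2| < t0 by rewrite ger0_norm; lra.
    have := segB _ ht; rewrite CfZ SfZ -/Cd Cd0 mulr0 g0 => /eqP.
    by rewrite mulf_eq0 => /orP[|/eqP //]; lra.
  move/negP: dn0; apply; apply/eqP; rewrite [d]surjective_pairing.
  by rewrite (rot1 d) (rot2 d) -/Cd Cd0 Sd0 !mulr0 subr0 addr0.
pose del := Num.min (r / 4) (t0 * `|Cd| / 4).
have del0 : 0 < del.
  by rewrite lt_min; apply/andP; split; [lra|rewrite !mulr_gt0 ?normr_gt0 //].
exists del => // y bY h1 h2.
have := h1; have := h2; rewrite !lt_min => /andP[h2a h2b] /andP[h1a h1b].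
have Sy : Sf (y - x) = gam (Cf (y - x)).
  by apply: clB => //; rewrite distrC.
pose sig := Cf (y - x).
pose tau := sig / Cd.
have hsig : `|sig| < t0 * `|Cd| / 2.
  apply: le_lt_trans (lin_bound _ _ hc hs) _ => /=.
  rewrite (distrC y.1) (distrC y.2); lra.
have htau : `|tau| < t0.
  rewrite /tau normrM normfV ltr_pdivrMr ?normr_gt0 //.
  have : 0 < t0 * `|Cd| by rewrite mulr_gt0 ?normr_gt0.
  lra.
exists tau; first exact: lt_le_trans htau t0r.
have hs1 := segB _ htau.
have eC : Cf (tau *: d) = sig by rewrite CfZ /tau -/Cd divfK.
have eS : Sf (tau *: d) = Sf (y - x) by rewrite hs1 eC Sy.
have ey1 : (y - x).1 = (tau *: d).1 by rewrite rot1 (rot1 (tau *: d)) eC eS.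
have ey2 : (y - x).2 = (tau *: d).2 by rewrite rot2 (rot2 (tau *: d)) eC eS.
apply: injective_projections; move: ey1 ey2; rewrite !pE; lra.
Qed.



Lemma fst_sum (I : Type) (s : seq I) (F : I -> @pt R) :
  (\sum_(i <- s) F i).1 = \sum_(i <- s) (F i).1.
Proof.
elim: s => [|i s IH]; first by rewrite !big_nil.
by rewrite !big_cons ad1 IH.
Qed.

Lemma snd_sum (I : Type) (s : seq I) (F : I -> @pt R) :
  (\sum_(i <- s) F i).2 = \sum_(i <- s) (F i).2.
Proof.
elim: s => [|i s IH]; first by rewrite !big_nil.
by rewrite !big_cons ad2 IH.
Qed.

Lemma isP2_ext (S : set (@pt R)) h h' : isP2 S h -> (forall x, h x = h' x) -> isP2 S h'.
Proof.
move=> [c0 [c1 [c2 [c3 [c4 [c5 H]]]]]] e.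
by exists c0, c1, c2, c3, c4, c5 => x Sx; rewrite -e H.
Qed.

Lemma isP2_add (S : set (@pt R)) h h' : isP2 S h -> isP2 S h' -> isP2 S (fun x => h x + h' x).
Proof.
move=> [c0 [c1 [c2 [c3 [c4 [c5 H]]]]]] [d0 [d1 [d2 [d3 [d4 [d5 H']]]]]].
exists (c0 + d0), (c1 + d1), (c2 + d2), (c3 + d3), (c4 + d4), (c5 + d5) => x Sx.
rewrite H // H' //; ring.
Qed.

Lemma isP2_scal (S : set (@pt R)) h (k : R) : isP2 S h -> isP2 S (fun x => h x * k).
Proof.
move=> [c0 [c1 [c2 [c3 [c4 [c5 H]]]]]].
exists (c0 * k), (c1 * k), (c2 * k), (c3 * k), (c4 * k), (c5 * k) => x Sx.
rewrite H //; ring.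
Qed.

Lemma isP2_sum (S : set (@pt R)) (I : eqType) (s : seq I) (F : I -> @pt R -> R) :
  (forall i, i \in s -> isP2 S (F i)) -> isP2 S (fun x => \sum_(i <- s) F i x).
Proof.
elim: s => [|i s IH] H.
  by exists 0, 0, 0, 0, 0, 0 => x _; rewrite big_nil; ring.
apply: (@isP2_ext _ (fun x => F i x + \sum_(j <- s) F j x)); last first.
  by move=> x; rewrite big_cons.
apply: isP2_add; first by apply: H; rewrite inE eqxx.
by apply: IH => j js; apply: H; rewrite inE js orbT.
Qed.

Lemma within_cont_sum (A : set (@pt R)) (I : eqType) (s : seq I) (F : I -> @pt R -> @pt R) :
  (forall i, i \in s -> {within A, continuous (F i)}) ->
  {within A, continuous (fun x => \sum_(i <- s) F i x)}.
Proof.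
elim: s => [|i s IH] H.
  have -> : (fun x : @pt R => \sum_(i <- [::]) F i x) = fun=> 0.
    by apply: funext => x; rewrite big_nil.
  exact: cst_continuous.
have -> : (fun x => \sum_(j <- i :: s) F j x) = F i + (fun x => \sum_(j <- s) F j x).
  by apply: funext => x; rewrite big_cons.
apply: within_continuousD; first by apply: H; rewrite inE eqxx.
by apply: IH => j js; apply: H; rewrite inE js orbT.
Qed.

Lemma within_cont_scal (A : set (@pt R)) (f : @pt R -> R) (k : @pt R) :
  {within A, continuous f} -> {within A, continuous (fun x => f x *: k)}.
Proof.
move=> cf x; apply: cvgZ; first exact: cf.
exact: cvg_cst.
Qed.



Lemma absLt (a b s : R) : `|a - b| < s -> a - s < b /\ b < a + s.
Proof. by rewrite ltr_norml => /andP[h1 h2]; split; lra. Qed.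

Lemma absLe (a b s : R) : `|a - b| <= s -> a - s <= b /\ b <= a + s.
Proof. by rewrite ler_norml => /andP[h1 h2]; split; lra. Qed.

Lemma ng1 (v : @pt R) : (- v).1 = - v.1. Proof. by []. Qed.
Lemma ng2 (v : @pt R) : (- v).2 = - v.2. Proof. by []. Qed.
Lemma sR (t a : R) : t *: a = t * a. Proof. by []. Qed.
Definition pE2 := (sc1, sc2, ad1, ad2, sb1, sb2, ng1, ng2, sR).

Lemma seg_in_tri (T : @tri R) (e : @pt R * @pt R) : e \in tri_edges T -> seg e `<=` tri_set T.
Proof.
move: T => [[A B] C]; rewrite /tri_edges /= !inE => /or3P[]/eqP-> x [t /andP[t0 t1] ->] /=.
- exists (1 - t), t, 0; split; [lra|lra|lra|lra|].
  by apply: injective_projections; rewrite !pE /=; ring.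
- exists 0, (1 - t), t; split; [lra|lra|lra|lra|].
  by apply: injective_projections; rewrite !pE /=; ring.
- exists t, 0, (1 - t); split; [lra|lra|lra|lra|].
  by apply: injective_projections; rewrite !pE /=; ring.
Qed.

Lemma edge_neq (T : @tri R) (e : @pt R * @pt R) : Defs.nondegenerate T -> e \in tri_edges T -> e.1 != e.2.
Proof.
move: T => [[A B] C]; rewrite /Defs.nondegenerate /tri_edges /= !inE => nd.
case/or3P => /eqP -> /=; apply/negP => /eqP E; move/negP: nd; apply;
  rewrite /det2 ?E; apply/eqP; rewrite !pE; ring.
Qed.

Lemma vert_on_seg (T : @tri R) (p v w : @pt R) : Defs.nondegenerate T -> p \in tri_vertices T ->
  v \in tri_vertices T -> w \in tri_vertices T -> v != w -> seg (v, w) p -> p = v \/ p = w.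
Proof.
move: T => [[A B] C]; rewrite /Defs.nondegenerate /tri_vertices /= !inE => nd.
case/or3P => /eqP -> ; case/or3P => /eqP -> ; case/or3P => /eqP -> ;
  rewrite ?eqxx //= => _; try (by left); try (by right);
  case=> t _ E; exfalso; move/negP: nd; apply;
  have e1 := f_equal fst E; have e2 := f_equal snd E; rewrite /= ?pE2 /= in e1 e2;
  rewrite /det2 ?pE2 ?e1 ?e2; apply/eqP; ring.
Qed.

Lemma mesh_edgeP (M : @mesh R) (e : @pt R * @pt R) : e \in mesh_edges M -> exists2 T, T \in M & e \in tri_edges T.
Proof. by case/flattenP => s /mapP [T TM ->] eT; exists T. Qed.

Lemma mesh_vertP (M : @mesh R) (p : @pt R) : p \in mesh_vertices M -> exists2 T, T \in M & p \in tri_vertices T.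
Proof. by case/flattenP => s /mapP [T TM ->] eT; exists T. Qed.

Lemma edges_onP (M : @mesh R) G (e : @pt R * @pt R) : e \in edges_on M G -> e \in mesh_edges M /\ seg e `<=` closure G.
Proof. by rewrite mem_filter => /andP[/asboolP h em]. Qed.

Lemma midp_seg (e : @pt R * @pt R) : seg e (midp e).
Proof.
exists (2^-1); first by apply/andP; split; lra.
by apply: injective_projections; rewrite /midp !pE; lra.
Qed.

Lemma seg_start (e : @pt R * @pt R) : seg e e.1.
Proof. by exists 0; [apply/andP; split; lra | rewrite scale0r addr0]. Qed.

Lemma seg_end (e : @pt R * @pt R) : seg e e.2.
Proof. by exists 1; [apply/andP; split; lra | rewrite scale1r addrC subrK]. Qed.

Lemma cnodesP (M : @mesh R) GC (z : @pt R) : z \in cnodes M GC ->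
  (z \in mesh_vertices M /\ closure GC z) \/ exists2 e, e \in edges_on M GC & z = midp e.
Proof.
rewrite mem_undup mem_cat => /orP[].
  by rewrite mem_filter => /andP[/asboolP h zm]; left.
by case/mapP => e eC ->; right; exists e.
Qed.

Lemma cnodes_cl (M : @mesh R) GC (z : @pt R) : z \in cnodes M GC -> closure GC z.
Proof.
case/cnodesP => [[] //|[e /edges_onP [_ sC] ->]]; exact/sC/midp_seg.
Qed.

Lemma GC_not_interior (O GC A : set (@pt R)) x : outward_normal_e1 O GC ->
  A `<=` closure O -> GC x -> ~ A° x.
Proof.
move=> on AO GCx intA.
have [r r0 H] := on x GCx.
have [e e0 He] := nbhs_ballE intA.
pose s := Num.min e r / 4.
have s0 : 0 < s by rewrite divr_gt0 // lt_min e0.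
have se : s < e by rewrite /s; have := ge_min e e r; rewrite lexx /= => h; lra.
have sr : 3 * s < r by rewrite /s; have := ge_min r e r; rewrite lexx orbT => h; lra.
pose y' : @pt R := (x.1 + s, x.2).
have Ay : A y'.
  apply: He; rewrite /y' /=; first by rewrite opprD addNKr normrN gtr0_norm.
  by rewrite subrr normr0.
have [y'' [Oy h1 h2]] := closure_ball (AO _ Ay) s0.
have [h1a h1b] := absLt h1; have [h2a h2b] := absLt h2.
move: h1a h1b h2a h2b; rewrite /y' /= => h1a h1b h2a h2b.
have pn : pnorm (y'' - x) < r.
  apply: (le_lt_trans (pnorm_le _)); rewrite !pE.
  have n1 : `|y''.1 - x.1| <= 2 * s by rewrite ler_norml; apply/andP; split; lra.
  have n2 : `|y''.2 - x.2| <= s by rewrite ler_norml; apply/andP; split; lra.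
  lra.
have := (H y'' pn).1 Oy; lra.
Qed.

Lemma affine01 (q : @pt R -> R) (a b : @pt R) : affine_on_scal a b q ->
  0 <= q a <= 1 -> 0 <= q b <= 1 -> forall t, 0 <= t <= 1 -> 0 <= q (a + t *: (b - a)) <= 1.
Proof.
case=> al [be h] ha hb t /andP[t0 t1].
have h0 : q a = al.
  by have := h 0; rewrite scale0r addr0 mul0r addr0; apply; rewrite lexx ler01.
have h1 : q b = al + be.
  by have := h 1; rewrite scale1r addrC subrK mul1r; apply; rewrite ler01 lexx.
rewrite h ?t0 ?t1 //; rewrite h0 in ha; rewrite h1 in hb.
move: ha hb => /andP[ha1 ha2] /andP[hb1 hb2].
have -> : al + t * be = (1 - t) * al + t * (al + be) by ring.
apply/andP; split; nra.
Qed.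

Lemma edge_cn (M : @mesh R) GC (e : @pt R * @pt R) : e \in edges_on M GC ->
  [/\ e.1 \in cnodes M GC, e.2 \in cnodes M GC & midp e \in cnodes M GC].
Proof.
move=> eC; have [em sC] := edges_onP eC.
have [T TM eT] := mesh_edgeP em.
have vT : e.1 \in tri_vertices T /\ e.2 \in tri_vertices T.
  move: eT; case: T TM => [[A B] C] _; rewrite /tri_edges /tri_vertices /= !inE.
  by case/or3P => /eqP -> /=; rewrite !eqxx ?orbT.
have mv v : v \in tri_vertices T -> v \in mesh_vertices M.
  by move=> vT'; apply/flattenP; exists (tri_vertices T) => //; exact: map_f.
rewrite /cnodes !mem_undup !mem_cat !mem_filter.
split.
- by apply/orP; left; rewrite mv ?vT.1 // andbT; apply/asboolP; apply: sC; exact: seg_start.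
- by apply/orP; left; rewrite mv ?vT.2 // andbT; apply/asboolP; apply: sC; exact: seg_end.
- by apply/orP; right; exact: map_f.
Qed.

Lemma seg_split (e : @pt R * @pt R) x : seg e x ->
  (exists2 t, 0 <= t <= 1 & x = e.1 + t *: (midp e - e.1)) \/
  (exists2 t, 0 <= t <= 1 & x = midp e + t *: (e.2 - midp e)).
Proof.
case=> t /andP[t0 t1] ->.
have [th|th] := lerP t (2^-1).
  left; exists (2 * t); first by apply/andP; split; lra.
  by apply: injective_projections; rewrite /midp !pE2; lra.
right; exists (2 * t - 1); first by apply/andP; split; lra.
by apply: injective_projections; rewrite /midp !pE2; lra.
Qed.

Lemma pn_gt0 (v : @pt R) : v != 0 -> 0 < pnorm v.
Proof.
move=> vn0; rewrite /pnorm sqrtr_gt0 lt_neqAle addr_ge0 ?sqr_ge0 // andbT.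
apply/eqP => h; move/negP: vn0; apply.
have a0 : v.1 ^+ 2 = 0 by have := sqr_ge0 v.1; have := sqr_ge0 v.2; lra.
have b0 : v.2 ^+ 2 = 0 by have := sqr_ge0 v.1; have := sqr_ge0 v.2; lra.
move/eqP: a0; move/eqP: b0; rewrite !sqrf_eq0 => /eqP b0 /eqP a0.
by apply/eqP; rewrite [v]surjective_pairing a0 b0.
Qed.

Lemma epar_flip (e : @pt R * @pt R) t : epar (e.2, e.1) t = epar e (1 - t).
Proof. by apply: injective_projections; rewrite /epar !pE2 /=; ring. Qed.

Lemma bint_pos (M : @mesh R) O S (h : @pt R -> R) (e : @pt R * @pt R) (a b : R) :
  (forall x, 0 <= \1_S x * h x <= 1) ->
  e \in mesh_edges M -> seg e `<=` boundary O -> e.1 != e.2 ->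
  0 <= a -> a < b -> b <= 1 ->
  (forall t, a <= t <= b -> 2^-1 <= \1_S (epar e t) * h (epar e t)) ->
  0 < bint M O S h.
Proof.
move=> G01 em sB en a0 ab b1 Gt.
have eB : nedge e \in bedges M O.
  rewrite /bedges mem_undup; apply: map_f; rewrite mem_filter em andbT.
  by apply/asboolP.
rewrite /bint (big_rem (nedge e)) //=.
have h2 : 0 <= \sum_(y <- rem (nedge e) (bedges M O)) lint y (fun x => \1_S x * h x).
  apply: sumr_ge0 => e' _; apply: mulr_ge0; first exact: sqrtr_ge0.
  by apply: Rintegral_ge0 => t _; case/andP: (G01 (epar e' t)).
suff h1 : 0 < lint (nedge e) (fun x => \1_S x * h x) by lra.
have dn0 : e.2 - e.1 != 0 by rewrite subr_eq0 eq_sym.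
rewrite /lint /nedge; case: ifP => _.
  apply: mulr_gt0; first exact: pn_gt0.
  apply: (@int_pos _ a b (2^-1)); [by move=> t; exact: G01|done|done|done|lra|done].
apply: mulr_gt0.
  by apply: pn_gt0; rewrite /= subr_eq0.
apply: (@int_pos _ (1 - b) (1 - a) (2^-1)); [by move=> t; exact: G01|lra|lra|lra|lra|].
move=> t /andP[h3 h4] /=; rewrite epar_flip; apply: Gt; apply/andP; split; lra.
Qed.

Lemma vert_in_tri (T : @tri R) v : v \in tri_vertices T -> tri_set T v.
Proof.
move: T => [[A B] C]; rewrite /tri_vertices /= !inE => /or3P[]/eqP -> /=.
- exists 1, 0, 0; split; [lra|lra|lra|lra|].
  by rewrite !scale0r !addr0 scale1r.
- exists 0, 1, 0; split; [lra|lra|lra|lra|].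
  by rewrite !scale0r addr0 add0r scale1r.
- exists 0, 0, 1; split; [lra|lra|lra|lra|].
  by rewrite !scale0r !add0r scale1r.
Qed.

Lemma vconf (M : @mesh R) Te Tp (p : @pt R) : conforming M ->
  (forall T, T \in M -> Defs.nondegenerate T) -> Te \in M -> Tp \in M ->
  p \in tri_vertices Tp -> tri_set Te p -> p \in tri_vertices Te.
Proof.
move=> conf nd TeM TpM pv pe.
have Ei := nth_index tri0 TeM; have Ej := nth_index tri0 TpM.
have [ij|ij] := eqVneq (index Te M) (index Tp M).
  by rewrite -Ei ij Ej.
have iM : (index Te M < size M)%N by rewrite index_mem.
have jM : (index Tp M < size M)%N by rewrite index_mem.
have := conf _ _ iM jM ij; rewrite /= Ei Ej => -[I0|[v [ve vp I1]]|[v [w [vw [ve vp] [we wp] I2]]]].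
- have : (tri_set Te `&` tri_set Tp) p by split => //; exact: vert_in_tri.
  by rewrite I0.
- have : (tri_set Te `&` tri_set Tp) p by split => //; exact: vert_in_tri.
  by rewrite I1 => ->.
- have : (tri_set Te `&` tri_set Tp) p by split => //; exact: vert_in_tri.
  rewrite I2 => ps.
  by case: (vert_on_seg (nd _ TpM) pv vp wp vw ps) => ->.
Qed.

Lemma cont_ext (A : set (@pt R)) (f : @pt R -> R) (p : @pt R) (eps : R) :
  {within A, continuous f} -> A p -> 0 < eps ->
  exists2 eta : R, 0 < eta & forall y, A y -> `|p.1 - y.1| < eta -> `|p.2 - y.2| < eta ->
    `|f p - f y| < eps.
Proof.
move=> cf Ap e0.
have := (subspace_continuousP _ f).1 cf p Ap.
move/cvgrPdist_lt => /(_ eps e0) H.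
have [eta eta0 He] := nbhs_ballE H.
by exists eta => // y Ay h1 h2; apply: He.
Qed.

Lemma POS (O GC U : set (@pt R)) (M : @mesh R) (phi0 : @pt R -> R) (T : @tri R)
    (e : @pt R * @pt R) (p : @pt R) :
  open O -> lipschitz_domain O -> outward_normal_e1 O GC -> open U -> GC = U `&` boundary O ->
  closure GC `<=` boundary O ->
  (forall T, T \in M -> tri_set T `<=` closure O) ->
  T \in M -> e \in tri_edges T -> p \in tri_nodes T -> Defs.nondegenerate T ->
  seg e `<=` closure GC ->
  {within closure GC, continuous phi0} -> phi0 p = 1 -> seg e p ->
  exists a b : R, [/\ 0 <= a, a < b, b <= 1 &
     forall t, a <= t <= b -> 2^-1 <= \1_(gammaC M GC p) (epar e t) * phi0 (epar e t)].
Proof.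
move=> oO lip on oU GCU clB triO TM eT pN nd sC cphi phip [tp /andP[tp0 tp1] pE0].
pose d := e.2 - e.1.
have dn0 : d != 0 by rewrite /d subr_eq0 eq_sym; exact: edge_neq nd eT.
have segP t : 0 <= t <= 1 -> seg e (e.1 + t *: d) by move=> h; exists t.
have pcl : closure GC p by apply: sC; exists tp => //; apply/andP.
have h2 : (0:R) < 2^-1 by lra.
have [eta eta0 Heta] := cont_ext cphi pcl h2.
have phiH y : closure GC y -> `|p.1 - y.1| < eta -> `|p.2 - y.2| < eta -> 2^-1 < phi0 y.
  by move=> cy q1 q2; have := Heta y cy q1 q2; rewrite phip => /absLt [hh _]; lra.
pose K := `|d.1| + `|d.2| + 1.
have Kd1 : `|d.1| < K by rewrite /K; have := normr_ge0 d.2; lra.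
have Kd2 : `|d.2| < K by rewrite /K; have := normr_ge0 d.1; lra.
have K0 : 0 < K by have := normr_ge0 d.1; lra.
pose ka := Num.min (4^-1) (eta / (2 * K)).
have ka0 : 0 < ka by rewrite lt_min; apply/andP; split; [lra| rewrite divr_gt0 // mulr_gt0].
have ka4 : ka <= 4^-1 by rewrite ge_min lexx.
have kaK : ka * K <= eta / 2.
  have : ka <= eta / (2 * K) by rewrite ge_min lexx orbT.
  by rewrite -ler_pdivlMr // invfM mulrA.
have [tx [tx0 tx1 txe]] : exists tx, [/\ 0 < tx, tx < 1 & `|tx - tp| = ka].
  case: (lerP tp (2^-1)) => h; [exists (tp + ka) | exists (tp - ka)]; split; try lra.
    have -> : tp + ka - tp = ka by ring.
    by rewrite gtr0_norm.
  have -> : tp - ka - tp = - ka by ring.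
  by rewrite normrN gtr0_norm.
pose x := e.1 + tx *: d.
have pEd : p = e.1 + tp *: d by [].
have px1 : `|p.1 - x.1| < eta / 2.
  have -> : p.1 - x.1 = (tp - tx) * d.1 by rewrite pEd /x !pE2; ring.
  rewrite normrM distrC txe; apply: lt_le_trans kaK; rewrite ltr_pM2l //.
have px2 : `|p.2 - x.2| < eta / 2.
  have -> : p.2 - x.2 = (tp - tx) * d.2 by rewrite pEd /x !pE2; ring.
  rewrite normrM distrC txe; apply: lt_le_trans kaK; rewrite ltr_pM2l //.
pose rho := Num.min tx (1 - tx).
have rho0 : 0 < rho by rewrite lt_min tx0 /=; lra.
have rho1 : rho <= tx by rewrite ge_min lexx.
have rho2 : rho <= 1 - tx by rewrite ge_min lexx orbT.
have segB tau : `|tau| < rho -> boundary O (x + tau *: d).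
  rewrite ltr_norml => /andP[ha hb].
  have -> : x + tau *: d = e.1 + (tx + tau) *: d by rewrite /x scalerDl addrA.
  by apply: clB; apply: sC; apply: segP; apply/andP; split; lra.
have bx : boundary O x by have := segB 0; rewrite normr0 scale0r addr0; apply.
have [del del0 Hdel] := LL oO lip bx dn0 rho0 segB.
have xcl : closure GC x by apply: sC; apply: segP; apply/andP; split; lra.
pose r1 := Num.min del (eta / 2).
have r10 : 0 < r1 by rewrite lt_min del0 /=; lra.
have r1d : r1 <= del by rewrite ge_min lexx.
have r1e : r1 <= eta / 2 by rewrite ge_min lexx orbT.
have [y [GCy xy1 xy2]] := closure_ball xcl r10.
have [Uy bY] : U y /\ boundary O y by move: GCy; rewrite GCU.
have [tau htau yE] := Hdel y bY (lt_le_trans xy1 r1d) (lt_le_trans xy2 r1d).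
pose ty := tx + tau.
have [ty0 ty1] : 0 < ty /\ ty < 1.
  by move: htau; rewrite ltr_norml /ty => /andP[ha hb]; split; lra.
have yE' : y = e.1 + ty *: d by rewrite yE /x /ty scalerDl addrA.
have [rh rh0 Hrh] : exists2 rh : R, 0 < rh & forall z, `|y.1 - z.1| < rh -> `|y.2 - z.2| < rh -> U z.
  by apply: nbhs_ballE; move: oU; rewrite openE => /(_ y Uy).
have py1 : `|p.1 - y.1| < eta.
  have := ler_distD x.1 p.1 y.1; lra.
have py2 : `|p.2 - y.2| < eta.
  have := ler_distD x.2 p.2 y.2; lra.
pose m := Num.min (eta - `|p.1 - y.1|) (eta - `|p.2 - y.2|).
have m0 : 0 < m by rewrite lt_min; apply/andP; split; lra.
have m1 : m <= eta - `|p.1 - y.1| by rewrite ge_min lexx.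
have m2 : m <= eta - `|p.2 - y.2| by rewrite ge_min lexx orbT.
pose mm := Num.min rh m.
have mm0 : 0 < mm by rewrite lt_min rh0 m0.
have mmr : mm <= rh by rewrite ge_min lexx.
have mmm : mm <= m by rewrite ge_min lexx orbT.
pose k2 := mm / K.
have k20 : 0 < k2 by rewrite divr_gt0.
have k2K : k2 * K = mm by rewrite /k2 divfK // gt_eqF.
exists ty, (Num.min 1 (ty + k2)); split.
- lra.
- by rewrite lt_min; apply/andP; split; lra.
- by rewrite ge_min lexx.
move=> t /andP[t1 t2].
have [t3 t4] : t <= 1 /\ t <= ty + k2 by move: t2; rewrite le_min => /andP.
rewrite /epar -/d.
set z := e.1 + t *: d.
have zseg : seg e z by apply: segP; apply/andP; split; lra.
have zcl := sC _ zseg.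
have yz1 : `|y.1 - z.1| < mm.
  have -> : y.1 - z.1 = (ty - t) * d.1 by rewrite yE' /z !pE2; ring.
  rewrite normrM; rewrite -k2K.
  have : `|ty - t| <= k2 by rewrite ler_norml; apply/andP; split; lra.
  move=> hk; apply: (le_lt_trans (ler_wpM2r (normr_ge0 _) hk)); rewrite ltr_pM2l //.
have yz2 : `|y.2 - z.2| < mm.
  have -> : y.2 - z.2 = (ty - t) * d.2 by rewrite yE' /z !pE2; ring.
  rewrite normrM; rewrite -k2K.
  have : `|ty - t| <= k2 by rewrite ler_norml; apply/andP; split; lra.
  move=> hk; apply: (le_lt_trans (ler_wpM2r (normr_ge0 _) hk)); rewrite ltr_pM2l //.
have Uz : U z by apply: Hrh; lra.
have GCz : GC z by rewrite GCU; split => //; exact: clB.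
have phiz : 2^-1 < phi0 z.
  apply: phiH => //.
    by have := ler_distD y.1 p.1 z.1; lra.
  by have := ler_distD y.2 p.2 z.2; lra.
have gz : gammaC M GC p z.
  split => //; split.
    apply: subset_closure; exists T; first by split.
    exact: seg_in_tri eT _ zseg.
  apply: (GC_not_interior on _ GCz) => z' [T' [T'M _] hz'].
  exact: triO T' T'M z' hz'.
by rewrite indicE mem_set // mul1r; lra.
Qed.
End Aux.

Unset Implicit Arguments.

Theorem lemma3p1 (R : realType)
  (O GD GN GC : set (@pt R)) (M : @mesh R) (chi mu : R)
  (f g : @pt R -> @pt R)
  (psi : @pt R -> @pt R -> R) (phi : @pt R -> @pt R -> R)
  (u lam : @pt R -> @pt R) :
  (* the domain and its triangulation *)
  open O -> connected O -> bounded_dom O -> lipschitz_domain O -> triangulation O M ->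
  (* the boundary parts *)
  boundary_partition O GD GN GC ->
  union_of_edges M GD -> union_of_edges M GN -> union_of_edges M GC ->
  0 < bint M O GD (fun _ => 1) ->
  closure GC `<=` boundary O `\` closure GD ->
  outward_normal_e1 O GC ->
  (* material parameters and data *)
  0 < chi -> 0 < mu ->
  L2dom O (fun x => (f x).1) -> L2dom O (fun x => (f x).2) ->
  L2bd M O GN (fun x => (g x).1) -> L2bd M O GN (fun x => (g x).2) ->
  (* psi_z : the scalar quadratic Lagrange nodal basis of V^h *)
  (forall z, free_node M GD z ->
     Vh_scal M O GD (psi z) /\
     forall p, free_node M GD p -> psi z p = (p == z)%:R) ->
  (* phi_z : the scalar piecewise affine nodal basis on the half-edge subdivision *)
  (forall z, z \in cnodes M GC ->
     Qh_scal M GC (phi z) /\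
     forall p, p \in cnodes M GC -> phi z p = (p == z)%:R) ->
  (* u^h solves the discrete variational inequality *)
  Kh M O GD GC u ->
  (forall v, Kh M O GD GC v ->
     aform O chi mu u (fun x => v x - u x) >= Lform M O GN f g (fun x => v x - u x)) ->
  (* lambda^h : the discrete contact force density *)
  Qh M GC lam ->
  (forall v, Qh M GC v ->
     iph M O GC phi lam v =
       Lform M O GN f g (pih M GC psi v) - aform O chi mu u (pih M GC psi v)) ->
  forall p, p \in cnodes M GC -> 0 <= (lam p).1 /\ (lam p).2 = 0.
Proof.
move=> oO _ _ lip tri bp uGD uGN uGC _ GCsub onorm _ _ _ _ _ _ hpsi hphi Ku VI Qlam lamdef p pC.
have [_ _ [GCbd [U [oU GCU]]] [_ hDC _] _] := bp.
have cn_free : forall z, z \in cnodes M GC -> free_node M GD z.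
  move=> z zC; case: (cnodesP zC) => [[zv zcl]|[e eC ->]].
    by left; split => // zD; have [_] := GCsub z zcl; apply.
  right; have [em sC] := edges_onP eC; split; first exact: map_f.
  apply/negP => /mapP [e' e'D E].
  have [_ sD] := edges_onP e'D.
  have [_] := GCsub _ (sC _ (midp_seg e)); apply; rewrite E; exact: sD _ (midp_seg e').
have phi01 : forall z, z \in cnodes M GC -> forall x, closure GC x -> 0 <= phi z x <= 1.
  move=> z zC x; rewrite {1}uGC => -[e /= [em sC] xe].
  have eC : e \in edges_on M GC by rewrite mem_filter em andbT; apply/asboolP.
  have [_ haff] := (hphi z zC).1.
  have [h1 h2] := haff e eC.
  have v01 y : y \in cnodes M GC -> 0 <= phi z y <= 1.
    by move=> yC; rewrite (hphi z zC).2 //; case: eqP => _; rewrite ?lexx ?ler01.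
  have [c1 c2 c3] := edge_cn eC.
  case: (seg_split xe) => -[t t01 ->]; apply: affine01; rewrite ?v01 //.
have wpos : 0 < bint M O (gammaC M GC p) (phi p).
  have [ndM confM clO] := tri.
  have triO : forall T, T \in M -> tri_set T `<=` closure O.
    by move=> T TM x Tx; rewrite clO; exists T.
  have clB : closure GC `<=` boundary O by move=> x /GCsub [].
  have [e [T [TM eT pN eC pseg]]] : exists e T, [/\ T \in M, e \in tri_edges T,
      p \in tri_nodes T, e \in edges_on M GC & seg e p].
    case: (cnodesP pC) => [[pv pcl]|[e eC pE]].
    - move: pcl; rewrite {1}uGC => -[e /= [em sC] pe].
      have [Te TeM eTe] := mesh_edgeP em.
      have [Tp TpM pTp] := mesh_vertP pv.
      exists e, Te; split => //.
      + rewrite /tri_nodes mem_cat; apply/orP; left.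
        apply: (vconf confM ndM TeM TpM pTp).
        exact: seg_in_tri eTe _ pe.
      + by rewrite mem_filter em andbT; apply/asboolP.
    - have [em _] := edges_onP eC; have [T TM eT] := mesh_edgeP em.
      exists e, T; split => //; last by rewrite pE; exact: midp_seg.
      by rewrite pE /tri_nodes mem_cat map_f ?orbT.
  have [em sC] := edges_onP eC.
  have [[cphi _] phv] := hphi p pC.
  have pp1 : phi p p = 1 by rewrite phv // eqxx.
  have [a [b [a0 ab b1 Hab]]] :=
    POS oO lip onorm oU GCU clB triO TM eT pN (ndM T TM) sC cphi pp1 pseg.
  apply: (bint_pos _ em _ (edge_neq (ndM T TM) eT) a0 ab b1 Hab).
    move=> x; rewrite indicE; case: (boolP (x \in gammaC M GC p)) => [/set_mem [_ GCx]|_].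
      by rewrite mul1r; apply: phi01 => //; exact: subset_closure.
    by rewrite mul0r lexx ler01.
  by move=> x /sC; exact: clB.
have test : forall a b : R, a <= 0 ->
    dotp (lam p) (a, b) * bint M O (gammaC M GC p) (phi p) <= 0.
  move=> a b a0.
  pose k : @pt R := (a, b).
  pose q := fun x => phi p x *: k.
  have Qq : Qh M GC q.
    have [[cphi haff] _] := hphi p pC.
    split; first exact: within_cont_scal.
    move=> e eC; have [[al [be h1]] [al' [be' h2]]] := haff e eC.
    split; [exists (al *: k), (be *: k) | exists (al' *: k), (be' *: k)] => t t01;
      by rewrite /q ?h1 ?h2 // scalerDl scalerA.
  have iphq : iph M O GC phi lam q = dotp (lam p) (a, b) * bint M O (gammaC M GC p) (phi p).
    rewrite /iph (bigD1_seq p) //=; last exact: undup_uniq.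
    rewrite big_seq_cond big1 ?addr0 => [|z /andP[zC zp]].
      by rewrite /q (hphi p pC).2 // eqxx scale1r.
    by rewrite /q (hphi p pC).2 // (negbTE zp) scale0r /dotp /= !mulr0 addr0 mul0r.
  have Kv : Kh M O GD GC (fun x => u x + pih M GC psi q x).
    have [[uP ucont uGD0] ucon] := Ku.
    have psiF z : z \in cnodes M GC -> Vh_scal M O GD (psi z).
      by move=> zC; exact: (hpsi z (cn_free z zC)).1.
    have pih1 x : (pih M GC psi q x).1 = \sum_(z <- cnodes M GC) psi z x * (q z).1.
      by rewrite /pih fst_sum.
    have pih2 x : (pih M GC psi q x).2 = \sum_(z <- cnodes M GC) psi z x * (q z).2.
      by rewrite /pih snd_sum.
    split; first split.
    - move=> T TM; have [u1 u2] := uP T TM; split.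
      + apply: (@isP2_ext _ _ (fun x => (u x).1 + \sum_(z <- cnodes M GC) psi z x * (q z).1)); last first.
          by move=> x; rewrite ad1 pih1.
        apply: isP2_add => //; apply: isP2_sum => z zC; apply: isP2_scal.
        by have [hP _ _] := psiF z zC; exact: hP.
      + apply: (@isP2_ext _ _ (fun x => (u x).2 + \sum_(z <- cnodes M GC) psi z x * (q z).2)); last first.
          by move=> x; rewrite ad2 pih2.
        apply: isP2_add => //; apply: isP2_sum => z zC; apply: isP2_scal.
        by have [hP _ _] := psiF z zC; exact: hP.
    - apply: (@within_continuousD _ _ _ _ u (pih M GC psi q)) => //.
      apply: within_cont_sum => z zC; apply: within_cont_scal.
      by have [_ hc _] := psiF z zC.
    - move=> x GDx; rewrite uGD0 // add0r /pih big1_seq // => z zC /=.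
      by have [_ _ h0] := psiF z zC; rewrite h0 // scale0r.
    - move=> z zC; rewrite ad1 pih1 (bigD1_seq z) //=; last exact: undup_uniq.
      rewrite big_seq_cond big1 ?addr0 => [|z' /andP[z'C zz']]; last first.
        rewrite ((hpsi z' (cn_free z' z'C)).2 z (cn_free z zC)).
        by case: eqP => [E|_]; [rewrite E eqxx in zz' | rewrite mul0r].
      rewrite ((hpsi z (cn_free z zC)).2 z (cn_free z zC)) eqxx mul1r /q.
      rewrite sR ((hphi p pC).2 z zC).
      have := ucon z zC; case: eqP => _; rewrite ?mul1r ?mul0r; lra.
  have hv := VI _ Kv.
  have E : (fun x => u x + pih M GC psi q x - u x) = pih M GC psi q.
    by apply: funext => x; rewrite addKr2.
  rewrite E in hv.
  by rewrite -iphq (lamdef q Qq) subr_le0.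
set w := bint M O (gammaC M GC p) (phi p) in wpos test.
have t1 := test (-1) 0 (lerN10 _).
have t2 := test 0 1 (lexx _).
have t3 := test 0 (-1) (lexx _).
rewrite /dotp /= in t1 t2 t3.
split; nra.
Qed.
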